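(* Let $\Phi(z)=\sum_{n\ge1}\varphi_nz^n$ be the power series, analytic near $0$, with $\varphi_1=1$ satisfying $$\int_0^1\Phi\big(rz+(1-r)z^2\big)\,dr=\tfrac12\,\Phi(z).$$ Then $F(z)=\int_0^z\Phi(\zeta)d\zeta$ satisfies $\frac{F(z)-F(z^2)}{z-z^2}=\frac12F'(z)$, and for all $n\ge2$: $$\varphi_n=\frac{n+1}{n-1}\varphi_{n-1}\ \text{ if $n$ is even},\qquad \varphi_n=\frac{n+1}{n-1}\varphi_{n-1}-\frac{4}{n-1}\varphi_{(n-1)/2}\ \text{ if $n$ is odd}.$$ Equivalently, $\psi_n=\varphi_n/n$ satisfies $\psi_1=1$, $\psi_n=(1+\frac1n)\psi_{n-1}$ for even $n$, and $\psi_n=(1+\frac1n)\psi_{n-1}-\frac2n\psi_{(n-1)/2}$ for odd $n\ge3$.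
   Context: This is the equation $\int\Phi(P_r(z))\mu(dr)=\Phi(z)\int p_{1r}\mu(dr)$ for $P_r(z)=rz+(1-r)z^2$ with $r$ uniformly distributed on $(0,1)$. *)

(* Defs.v *)
From Stdlib Require Import Reals.
From Coquelicot Require Import Coquelicot.
Open Scope R_scope.

Definition Phi (phi : nat -> R) (z : R) : R := PSeries phi z.

Definition Fint (phi : nat -> R) (z : R) : R := RInt (Phi phi) 0 z.

Definition Pr (r z : R) : R := r * z + (1 - r) * z ^ 2.

Definition psi (phi : nat -> R) (n : nat) : R := phi n / INR n.

(* Main.v *)
Require Import Defs.
From Stdlib Require Import Reals Arith.
From Coquelicot Require Import Coquelicot.
From Stdlib Require Import Lra Lia.
Open Scope R_scope.


Lemma lim0_bounded (u : nat -> R) : is_lim_seq u 0 -> exists M, forall n, Rabs (u n) <= M.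
Proof.
  intros Hu. apply is_lim_seq_abs in Hu. simpl in Hu. rewrite Rabs_R0 in Hu.
  apply is_lim_seq_Reals in Hu.
  destruct (cauchy_bound _ (CV_Cauchy _ (exist _ 0 Hu))) as [M HM].
  exists M. intros n. apply HM. exists n. reflexivity.
Qed.

Definition espr (phi : nat -> R) (n : nat) : R :=
  if Nat.even n then PS_Int phi (Nat.div2 n) else 0.

Lemma espr_even phi k : espr phi (2 * k) = PS_Int phi k.
Proof.
  unfold espr. replace (Nat.even (2*k)) with true.
  - now rewrite Nat.div2_double.
  - rewrite <- (Nat.add_0_l (2*k)), Nat.even_add_mul_2. reflexivity.
Qed.

Lemma espr_odd phi k : espr phi (2 * k + 1) = 0.
Proof.
  unfold espr. replace (Nat.even (2*k+1)) with false; auto.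
  rewrite Nat.add_comm, Nat.even_add_mul_2. reflexivity.
Qed.

Lemma espr_radius phi r : 0 <= r -> Rbar_lt (r^2) (CV_radius phi) ->
  Rbar_le r (CV_radius (espr phi)).
Proof.
  intros Hr Hrad.
  assert (H : Rbar_lt (Rabs (r^2)) (CV_radius (PS_Int phi))).
  { rewrite CV_radius_Int, Rabs_right; auto. apply Rle_ge, pow2_ge_0. }
  apply CV_disk_inside, ex_series_lim_0, lim0_bounded in H.
  destruct H as [M HM].
  apply (proj1 (CV_radius_bounded (espr phi))).
  exists M. intros n. destruct (Nat.Even_or_Odd n) as [[k ->]|[k ->]].
  - rewrite espr_even, pow_mult. specialize (HM k). rewrite Rabs_Rabsolu in HM. exact HM.
  - rewrite espr_odd, Rmult_0_l, Rabs_R0. specialize (HM 0%nat).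
    eapply Rle_trans; [apply Rabs_pos|]. exact HM.
Qed.

Lemma espr_PSeries phi z : Rbar_lt (Rabs (z^2)) (CV_radius phi) ->
  PSeries (espr phi) z = PSeries (PS_Int phi) (z^2).
Proof.
  intros Hr.
  assert (He : ex_pseries (fun n => espr phi (2*n)) (z^2)).
  { apply ex_pseries_ext with (PS_Int phi). intros; now rewrite espr_even.
    apply CV_radius_inside. now rewrite CV_radius_Int. }
  assert (Ho : ex_pseries (fun n => espr phi (2*n+1)) (z^2)).
  { apply ex_pseries_ext with (fun _ => 0). intros; now rewrite espr_odd.
    apply CV_radius_inside. rewrite CV_radius_const_0. easy. }
  rewrite (PSeries_odd_even _ _ He Ho).
  rewrite (PSeries_ext _ (PS_Int phi)) by (intros; now rewrite espr_even).
  rewrite (PSeries_ext (fun n => espr phi (2*n+1)) (fun _ => 0)) by (intros; now rewrite espr_odd).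
  rewrite PSeries_const_0. ring.
Qed.

Definition hser (phi : nat -> R) :=
  PS_plus (PS_Int phi) (PS_opp (PS_plus (espr phi)
    (PS_scal (/2) (PS_plus (PS_incr_1 phi) (PS_opp (PS_incr_1 (PS_incr_1 phi))))))).

Lemma rbar_le_min x a b : Rbar_le x a -> Rbar_le x b -> Rbar_le x (Rbar_min a b).
Proof. intros. apply Rbar_min_case_strong; auto. Qed.

Lemma hser_radius phi r : Rbar_le r (CV_radius phi) -> Rbar_le r (CV_radius (espr phi)) ->
  Rbar_le r (CV_radius (hser phi)).
Proof.
  intros H1 H2. unfold hser.
  eapply Rbar_le_trans; [|apply CV_radius_plus]. apply rbar_le_min.
  now rewrite CV_radius_Int.
  rewrite CV_radius_opp.
  eapply Rbar_le_trans; [|apply CV_radius_plus]. apply rbar_le_min; auto.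
  rewrite CV_radius_scal by (apply Rinv_neq_0_compat; lra).
  eapply Rbar_le_trans; [|apply CV_radius_plus]. apply rbar_le_min.
  now rewrite CV_radius_incr_1.
  now rewrite CV_radius_opp, !CV_radius_incr_1.
Qed.

Lemma hser_PSeries phi z :
  Rbar_lt (Rabs z) (CV_radius phi) -> Rbar_lt (Rabs z) (CV_radius (espr phi)) ->
  Rbar_lt (Rabs (z^2)) (CV_radius phi) ->
  PSeries (hser phi) z = PSeries (PS_Int phi) z - PSeries (PS_Int phi) (z^2)
     - / 2 * (z * PSeries phi z - z * (z * PSeries phi z)).
Proof.
  intros H1 H2 H3.
  assert (E1 : ex_pseries (PS_Int phi) z) by (apply CV_radius_inside; now rewrite CV_radius_Int).
  assert (E2 : ex_pseries (espr phi) z) by (apply CV_radius_inside; auto).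
  assert (E3 : ex_pseries phi z) by (apply CV_radius_inside; auto).
  assert (E4 : ex_pseries (PS_incr_1 phi) z) by (apply ex_pseries_incr_1; auto).
  assert (E5 : ex_pseries (PS_opp (PS_incr_1 (PS_incr_1 phi))) z)
    by (apply ex_pseries_opp, ex_pseries_incr_1; auto).
  assert (E6 : ex_pseries (PS_scal (/2) (PS_plus (PS_incr_1 phi) (PS_opp (PS_incr_1 (PS_incr_1 phi))))) z).
  { apply ex_pseries_scal. apply Rmult_comm. apply ex_pseries_plus; auto. }
  unfold hser.
  rewrite PSeries_plus; auto.
  2: { apply ex_pseries_opp, ex_pseries_plus; auto. }
  rewrite PSeries_opp, PSeries_plus; auto.
  rewrite PSeries_scal, PSeries_plus; auto.
  rewrite PSeries_opp, !PSeries_incr_1, espr_PSeries; auto. ring.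
Qed.

Lemma hser_S phi m : hser phi (S (S m)) =
  phi (S m) / INR (S (S m)) - (espr phi (S (S m)) + /2 * (phi (S m) - phi m)).
Proof. unfold hser, PS_plus, PS_opp, PS_scal, PS_incr_1, PS_Int. cbv beta iota.
 repeat change (plus ?a ?b) with (a + b). repeat change (opp ?a) with (- a).
 repeat change (scal ?a ?b) with (a * b). reflexivity. Qed.

Lemma exists_r0 rho d : Rbar_lt 0 rho -> 0 < d ->
  exists r, 0 < r /\ r <= /2 /\ r < d /\ Rbar_lt r rho.
Proof.
  intros Hr Hd. destruct rho as [p| |]; simpl in Hr; try easy.
  - set (a := Rmin (/2) (d/2)).
    assert (0 < a /\ a <= /2 /\ a < d).
    { unfold a. apply Rmin_case_strong; intros; lra. }
    exists (Rmin a (p/2)).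
    assert (Rmin a (p/2) <= a) by apply Rmin_l.
    assert (Rmin a (p/2) <= p/2) by apply Rmin_r.
    assert (0 < Rmin a (p/2)) by (apply Rmin_case_strong; intros; lra).
    simpl. lra.
  - exists (Rmin (/2) (d/2)). repeat split; simpl;
    repeat (apply Rmin_case_strong; intros); lra.
Qed.

Lemma rad_of phi (r0 : R) z : Rbar_lt r0 (CV_radius phi) -> Rabs z < r0 ->
  Rbar_lt (Rabs z) (CV_radius phi).
Proof.
  intros H Hz. destruct (CV_radius phi) as [p| |]; simpl in *; auto. lra.
Qed.

Lemma sq_small z : Rabs z < 1 -> Rabs (z^2) <= Rabs z.
Proof.
  intros H. rewrite <- RPow_abs. simpl. rewrite Rmult_1_r.
  pose proof (Rabs_pos z). nra.
Qed.

Lemma key phi d r0 : 0 < r0 -> r0 <= /2 -> r0 <= d -> Rbar_lt r0 (CV_radius phi) ->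
  (forall z : R, Rabs z < d -> is_RInt (fun r => Phi phi (Pr r z)) 0 1 (Phi phi z / 2)) ->
  forall z, Rabs z < r0 ->
  (z - z^2) * (Phi phi z / 2) = PSeries (PS_Int phi) z - PSeries (PS_Int phi) (z^2).
Proof.
  intros Hr0 Hr2 Hd Hrad Hint z Hz.
  assert (Rz : Rbar_lt (Rabs z) (CV_radius phi)) by (eapply rad_of; eauto).
  assert (Rz2 : Rbar_lt (Rabs (z^2)) (CV_radius phi)).
  { apply rad_of with r0; auto. assert (Rabs (z^2) <= Rabs z) by (apply sq_small; lra). lra. }
  set (u := z - z^2). set (v := z^2).
  assert (I1 : is_RInt (fun y => PSeries phi (u * y + v)) 0 1 (Phi phi z / 2)).
  { apply is_RInt_ext with (fun r => Phi phi (Pr r z)).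
    - intros x _. unfold Phi, Pr, u, v. f_equal. ring.
    - apply Hint. lra. }
  assert (I2 : RInt (fun y => u * PSeries phi (u*y+v)) 0 1 = u * (Phi phi z / 2)).
  { apply is_RInt_unique. apply (is_RInt_scal _ _ _ u _ I1). }
  assert (EX : ex_RInt (PSeries phi) (z^2) z).
  { apply ex_RInt_Chasles with 0.
    apply ex_RInt_swap, ex_RInt_PSeries; auto.
    apply ex_RInt_PSeries; auto. }
  assert (I3 : is_RInt (fun y => u * PSeries phi (u*y+v)) 0 1 (RInt (PSeries phi) (z^2) z)).
  { assert (H5 : is_RInt (PSeries phi) (u*0+v) (u*1+v) (RInt (PSeries phi) (z^2) z)).
    { replace (u*0+v) with (z^2) by (unfold u, v; ring).
      replace (u*1+v) with z by (unfold u, v; ring).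
      apply (RInt_correct (V:=R_CompleteNormedModule)); auto. }
    exact (is_RInt_comp_lin (PSeries phi) u v 0 1 _ H5). }
  assert (I4 : RInt (PSeries phi) (z^2) z = u * (Phi phi z / 2)).
  { rewrite <- I2. symmetry. apply (is_RInt_unique (V:=R_CompleteNormedModule)). exact I3. }
  assert (E1 : ex_RInt (PSeries phi) 0 (z^2)) by (apply ex_RInt_PSeries; auto).
  assert (HC : RInt (PSeries phi) 0 (z^2) + RInt (PSeries phi) (z^2) z = RInt (PSeries phi) 0 z)
    by exact (RInt_Chasles (V:=R_CompleteNormedModule) (PSeries phi) 0 (z^2) z E1 EX).
  rewrite (RInt_PSeries _ _ Rz), (RInt_PSeries _ _ Rz2) in HC.
  unfold v. lra.
Qed.

Lemma even_2k k : Nat.even (2*k) = true.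
Proof. rewrite <- (Nat.add_0_l (2*k)), Nat.even_add_mul_2. reflexivity. Qed.
Lemma even_2k1 k : Nat.even (2*k+1) = false.
Proof. rewrite Nat.add_comm, Nat.even_add_mul_2. reflexivity. Qed.

Lemma rec_even phi k : (1 <= k)%nat -> hser phi (S (2*k)) = 0 ->
  phi (2*k)%nat = (INR (2*k) + 1) / (INR (2*k) - 1) * phi (2*k-1)%nat.
Proof.
  intros Hk H.
  replace (S (2*k)) with (S (S (2*k-1))) in H by lia.
  rewrite hser_S in H.
  replace (S (S (2*k-1))) with (2*(k-1)+1+2)%nat in H by lia.
  replace (2*(k-1)+1+2)%nat with (2*k+1)%nat in H by lia.
  rewrite espr_odd in H.
  replace (S (2*k-1)) with (2*k)%nat in H by lia.
  rewrite plus_INR in H. simpl (INR 1) in H.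
  set (x := INR (2*k)) in *. set (p := phi (2*k)%nat) in *. set (q := phi (2*k-1)%nat) in *.
  assert (Hx : 2 <= x). { unfold x. replace 2 with (INR 2) by (simpl; lra). apply le_INR. lia. }
  assert (E2 : 2*p - (x+1)*(p-q) = 0).
  { replace (2*p - (x+1)*(p-q)) with (2*(x+1)*(p/(x+1) - (0 + /2*(p-q)))) by (field; lra).
    rewrite H. ring. }
  apply (Rmult_eq_reg_r (x-1)); [|lra].
  replace ((x+1)/(x-1)*q*(x-1)) with ((x+1)*q) by (field; lra).
  replace (p*(x-1)) with ((x+1)*q - (2*p - (x+1)*(p-q))) by ring. rewrite E2. ring.
Qed.

Lemma rec_odd phi k : (1 <= k)%nat -> hser phi (S (2*k+1)) = 0 ->
  phi (2*k+1)%nat = (INR (2*k+1) + 1) / (INR (2*k+1) - 1) * phi (2*k)%nat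
                    - 4 / (INR (2*k+1) - 1) * phi k.
Proof.
  intros Hk H.
  replace (S (2*k+1)) with (S (S (2*k))) in H by lia.
  rewrite hser_S in H.
  replace (S (S (2*k))) with (2*(S k))%nat in H by lia.
  rewrite espr_even in H. unfold PS_Int in H.
  replace (2 * S k)%nat with (S (S (2*k))) in H by lia.
  replace (S (2*k)) with (2*k+1)%nat in H by lia.
  rewrite !S_INR in H. rewrite plus_INR, mult_INR in *. assert (I2 : INR 2 = 2) by (simpl; ring). assert (I1 : INR 1 = 1) by (simpl; ring).
  rewrite ?I2, ?I1 in *.
  set (K := INR k) in *. set (p := phi (2*k+1)%nat) in *. set (q := phi (2*k)%nat) in *.
  set (c := phi k) in *.
  assert (HK : 1 <= K). { unfold K. replace 1 with (INR 1) by (simpl; lra). apply le_INR. lia. }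
  assert (E2 : 2*p - 4*c - (2*K+2)*(p-q) = 0).
  { replace (2*p - 4*c - (2*K+2)*(p-q)) with
      (2*(2*K+1+1)*(p/(2*K+1+1) - (c/(K+1) + /2*(p-q)))) by (field; lra).
    rewrite H. ring. }
  apply (Rmult_eq_reg_r (2*K+1-1)); [|lra].
  replace (((2*K+1)+1)/(2*K+1-1)*q - 4/(2*K+1-1)*c) with (((2*K+2)*q - 4*c)/(2*K)) by (field; lra).
  replace (2*K+1-1) with (2*K) by ring.
  replace (((2*K+2)*q - 4*c)/(2*K)*(2*K)) with ((2*K+2)*q - 4*c) by (field; lra).
  replace (p*(2*K)) with ((2*K+2)*q - 4*c - (2*p - 4*c - (2*K+2)*(p-q))) by ring.
  rewrite E2. ring.
Qed.

Lemma rbar_lt_of (x y : R) r : x < y -> Rbar_le y r -> Rbar_lt x r.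
Proof. intros H1 H2. destruct r as [p| |]; simpl in *; auto; lra. Qed.

Theorem mainTheorem5 (phi : nat -> R) :
  phi 0%nat = 0 ->
  phi 1%nat = 1 ->
  Rbar_lt (Finite 0) (CV_radius phi) ->
  (exists delta : R, 0 < delta /\
     forall z : R, Rabs z < delta ->
       is_RInt (fun r => Phi phi (Pr r z)) 0 1 (Phi phi z / 2)) ->
  (exists delta : R, 0 < delta /\
     forall z : R, 0 < Rabs z < delta ->
       (Fint phi z - Fint phi (z ^ 2)) / (z - z ^ 2) = / 2 * Derive (Fint phi) z)
  /\
  (forall n : nat, (2 <= n)%nat ->
     (Nat.even n = true ->
        phi n = (INR n + 1) / (INR n - 1) * phi (n - 1)%nat) /\
     (Nat.even n = false ->
        phi n = (INR n + 1) / (INR n - 1) * phi (n - 1)%nat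
                - 4 / (INR n - 1) * phi ((n - 1) / 2)%nat))
  /\
  (psi phi 1%nat = 1 /\
   forall n : nat, (2 <= n)%nat ->
     (Nat.even n = true ->
        psi phi n = (1 + / INR n) * psi phi (n - 1)%nat) /\
     (Nat.even n = false ->
        psi phi n = (1 + / INR n) * psi phi (n - 1)%nat
                    - 2 / INR n * psi phi ((n - 1) / 2)%nat)).
Proof.
  intros H0 H1 Hrad [d [Hd Hint]].
  destruct (exists_r0 _ _ Hrad Hd) as [r0 [Hr0 [Hr2 [Hrd Hrr]]]].
  assert (K := key phi d r0 Hr0 Hr2 (Rlt_le _ _ Hrd) Hrr Hint).
  assert (Hrl : Rbar_le r0 (CV_radius phi)) by (apply Rbar_lt_le; auto).
  assert (Hesp : Rbar_le r0 (CV_radius (espr phi))).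
  { apply espr_radius; [lra|]. apply rbar_lt_of with r0; auto. nra. }
  assert (Hhz : forall t, Rabs t < r0 -> PSeries (hser phi) t = 0).
  { intros t Ht. rewrite hser_PSeries.
    - replace (PSeries (PS_Int phi) t - PSeries (PS_Int phi) (t^2))
        with ((t - t^2)*(Phi phi t/2)) by (rewrite K; auto).
      unfold Phi. set (P := PSeries phi t) in *. field.
    - apply rbar_lt_of with r0; auto.
    - apply rbar_lt_of with r0; auto.
    - assert (Rabs (t^2) <= Rabs t) by (apply sq_small; lra).
      apply rbar_lt_of with r0; auto; lra. }
  assert (Hcoef : forall n, hser phi (S n) = 0).
  { intros n.
    assert (Hr : Rbar_lt 0 (CV_radius (hser phi))).
    { apply rbar_lt_of with r0; auto. apply hser_radius; auto. }
    assert (D := Derive_n_coef (hser phi) (S n) Hr).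
    rewrite (Derive_n_ext_loc _ (fun _ => 0)) in D.
    - rewrite Derive_n_const in D. symmetry in D.
      apply Rmult_integral in D. destruct D as [D|D]; auto.
      exfalso; apply (INR_fact_neq_0 _ D).
    - exists (mkposreal r0 Hr0). intros y Hy. apply Hhz.
      change (Rabs (y - 0) < r0) in Hy. rewrite Rminus_0_r in Hy. exact Hy. }
  assert (Rec : forall n : nat, (2 <= n)%nat ->
     (Nat.even n = true ->
        phi n = (INR n + 1) / (INR n - 1) * phi (n - 1)%nat) /\
     (Nat.even n = false ->
        phi n = (INR n + 1) / (INR n - 1) * phi (n - 1)%nat
                - 4 / (INR n - 1) * phi ((n - 1) / 2)%nat)).
  { intros n Hn. destruct (Nat.Even_or_Odd n) as [[k Hk]|[k Hk]]; subst n.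
    - split; intros E.
      + apply rec_even; [lia|]. apply Hcoef.
      + rewrite even_2k in E. discriminate.
    - split; intros E.
      + rewrite even_2k1 in E. discriminate.
      + replace ((2*k+1-1)/2)%nat with k.
        2: { rewrite Nat.add_sub, Nat.mul_comm, Nat.div_mul; lia. }
        replace (2*k+1-1)%nat with (2*k)%nat by lia.
        apply rec_odd; [lia|]. apply Hcoef. }
  split; [|split; [exact Rec|split]].
  -
    exists r0. split; auto. intros z [Hz0 Hz].
    assert (Rz : Rbar_lt (Rabs z) (CV_radius phi)) by (apply rbar_lt_of with r0; auto).
    assert (Rz2 : Rbar_lt (Rabs (z^2)) (CV_radius phi)).
    { assert (Rabs (z^2) <= Rabs z) by (apply sq_small; lra).
      apply rbar_lt_of with r0; auto; lra. }
    assert (DF : Derive (Fint phi) z = Phi phi z).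
    { apply is_derive_unique. unfold Fint.
      apply (is_derive_RInt (Phi phi) (fun b => RInt (Phi phi) 0 b) 0 z).
      - assert (He : 0 < r0 - Rabs z) by lra.
        exists (mkposreal _ He). intros y Hy.
        change (Rabs (y - z) < r0 - Rabs z) in Hy.
        apply (RInt_correct (V:=R_CompleteNormedModule)).
        unfold Phi. apply ex_RInt_PSeries. apply rbar_lt_of with r0; auto.
        pose proof (Rabs_triang_inv y z). lra.
      - unfold Phi. apply ex_derive_continuous, ex_derive_PSeries; auto. }
    rewrite DF. unfold Fint. unfold Phi.
    change (fun z0 : R => PSeries phi z0) with (PSeries phi). rewrite (RInt_PSeries _ _ Rz), (RInt_PSeries _ _ Rz2).
    assert (Hu : z - z^2 <> 0).
    { intro Heq. assert (z*(1-z) = 0) by (rewrite <- Heq; ring).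
      apply Rmult_integral in H. destruct H as [H|H].
      - subst z. rewrite Rabs_R0 in Hz0. lra.
      - assert (z = 1) by lra. subst z. rewrite Rabs_R1 in Hz. lra. }
    rewrite <- (K z) by lra. unfold Phi. field. auto.
  - unfold psi. rewrite H1. simpl. field.
  - intros n Hn. destruct (Rec n Hn) as [RE RO].
    assert (Hx : 2 <= INR n) by (replace 2 with (INR 2) by (simpl; ring); apply le_INR; lia).
    assert (Hn1 : INR (n-1) = INR n - 1) by (rewrite minus_INR by lia; simpl; ring).
    unfold psi. rewrite Hn1. split; intros E.
    + rewrite (RE E). field. lra.
    + rewrite (RO E). destruct (Nat.Even_or_Odd n) as [[k Hk]|[k Hk]].
      * subst n. rewrite even_2k in E. discriminate.
      * assert (Hq : ((n-1)/2)%nat = k) by (subst n; rewrite Nat.add_sub, Nat.mul_comm, Nat.div_mul; lia).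
        rewrite Hq. assert (HK : INR n = 2 * INR k + 1).
        { subst n. rewrite plus_INR, mult_INR. simpl. ring. }
        rewrite HK. rewrite HK in Hx. field. lra.
Qed.
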